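(* Let $\Gamma=(V,E)$ be a graph, for each $v\in V$ let $C_v$ be a left LCM monoid, and let $C=\Gamma_{v\in V}C_v$. Then for each $v\in V$, the inverse hull $IH^0(C_v)$ embeds in $IH^0(C)$, i.e. there is an injective monoid homomorphism $IH^0(C_v)\to IH^0(C)$.
   Context: A graph $\Gamma=(V,E)$ has vertex set $V$ and irreflexive symmetric edge relation $E$. The graph product $\Gamma_{v\in V}C_v$ of pairwise disjoint monoids $C_v$ is the quotient of their free product by the congruence generated by all $(mn,nm)$ with $m\in C_u$, $n\in C_v$, $(u,v)\in E$. A left LCM monoid is a right cancellative monoid in which the intersection of any two principal left ideals is empty or principal. For a right cancellative monoid $D$ and $a\in D$, $\rho_a:D\to D$, $x\mapsto xa$, is regarded as an element of the symmetric inverse monoid of all partial bijections of $D$; the inverse hull $IH(D)$ is the inverse submonoid generated by all $\rho_a$, and $IH^0(D)=IH(D)\cup\{\emptyset\}$ with the empty map as zero. *)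

(* Defs.v *)
From Stdlib Require Import List IndefiniteDescription.
Import ListNotations.
Set Implicit Arguments.

Record Monoid := {
  mcar :> Type;
  mmul : mcar -> mcar -> mcar;
  mone : mcar;
  massoc : forall x y z, mmul x (mmul y z) = mmul (mmul x y) z;
  mone_l : forall x, mmul mone x = x;
  mone_r : forall x, mmul x mone = x }.
Arguments mmul {m} _ _.
Arguments mone {m}.

Definition right_cancellative (M : Monoid) : Prop :=
  forall x y a : M, mmul x a = mmul y a -> x = y.

Definition in_left_ideal {M : Monoid} (a x : M) : Prop :=
  exists y : M, x = mmul y a.

Definition left_LCM (M : Monoid) : Prop :=
  right_cancellative M /\
  forall a b : M,
    (forall x, ~ (in_left_ideal a x /\ in_left_ideal b x)) \/
    (exists c : M, forall x,
        (in_left_ideal a x /\ in_left_ideal b x) <-> in_left_ideal c x).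

Definition is_graph (V : Type) (E : V -> V -> Prop) : Prop :=
  (forall v, ~ E v v) /\ (forall u v, E u v -> E v u).

Section GraphProduct.
Variables (V : Type) (E : V -> V -> Prop) (C : V -> Monoid).

Definition letter := {v : V & mcar (C v)}.
Definition word := list letter.
Definition lt (v : V) (a : C v) : letter := existT (fun w => mcar (C w)) v a.

Inductive gp_step : word -> word -> Prop :=
| gs_one v : gp_step [lt v mone] []
| gs_mul v (a b : C v) : gp_step [lt v a; lt v b] [lt v (mmul a b)]
| gs_comm u v (m : C u) (n : C v) :
    E u v -> gp_step [lt u m; lt v n] [lt v n; lt u m].

Inductive gp_cong : word -> word -> Prop :=
| gc_step p l r s : gp_step l r -> gp_cong (p ++ l ++ s) (p ++ r ++ s)
| gc_refl w : gp_cong w w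
| gc_sym w1 w2 : gp_cong w1 w2 -> gp_cong w2 w1
| gc_trans w1 w2 w3 : gp_cong w1 w2 -> gp_cong w2 w3 -> gp_cong w1 w3.

(** the graph product: the quotient of words by gp_cong (congruence classes) *)
Definition GP : Type := {P : word -> Prop | exists w, P = gp_cong w}.
Definition gp_class (w : word) : GP :=
  exist _ (gp_cong w) (ex_intro _ w eq_refl).
Definition gp_rep (p : GP) : word :=
  proj1_sig (constructive_indefinite_description _ (proj2_sig p)).
Definition gp_mul (p q : GP) : GP := gp_class (gp_rep p ++ gp_rep q).
End GraphProduct.

Definition prel (X : Type) := X -> X -> Prop.
Definition releq (X : Type) (f g : prel X) : Prop := forall x y, f x y <-> g x y.
(** composition: first f, then g *)
Definition rcomp (X : Type) (f g : prel X) : prel X :=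
  fun x z => exists y, f x y /\ g y z.
Definition rinv (X : Type) (f : prel X) : prel X := fun x y => f y x.
Definition rempty (X : Type) : prel X := fun _ _ => False.
Definition rho (X : Type) (mul : X -> X -> X) (a : X) : prel X :=
  fun x y => y = mul x a.

Inductive IH (X : Type) (mul : X -> X -> X) : prel X -> Prop :=
| IH_id : IH mul (@eq X)
| IH_r a f : IH mul f -> IH mul (rcomp f (rho mul a))
| IH_ri a f : IH mul f -> IH mul (rcomp f (rinv (rho mul a)))
| IH_ext f g : IH mul f -> releq f g -> IH mul g.

Definition IH0 (X : Type) (mul : X -> X -> X) (f : prel X) : Prop :=
  IH mul f \/ releq f (@rempty X).

(* Main.v *)
Require Import Defs.
From Stdlib Require Import List ClassicalEpsilon ProofIrrelevance Eqdep FunctionalExtensionality PropExtensionality.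
Import ListNotations.
Set Implicit Arguments.

Section NF.
Variables (V : Type) (E : V -> V -> Prop) (C : V -> Monoid).
Hypothesis Hirr : forall u, ~ E u u.
Hypothesis Hsym : forall u w, E u w -> E w u.

Definition dec (P : Prop) : {P} + {~ P} := excluded_middle_informative P.
Notation L := (letter C).
Definition vt (x : L) : V := projT1 x.
Definition isone (x : L) : Prop := projT2 x = mone.

Definition combine (y x : L) : L :=
  match dec (projT1 y = projT1 x) with
  | left e => existT (fun w => mcar (C w)) (projT1 x)
                (mmul (eq_rect _ (fun w => mcar (C w)) (projT2 y) _ e) (projT2 x))
  | right _ => x
  end.

Lemma combine_eq u (a b : C u) :
  combine (existT _ u a) (existT _ u b) = existT _ u (mmul a b).
Proof.
  unfold combine; simpl. destruct (dec (u = u)) as [e|n].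
  - rewrite (UIP_refl _ _ e). reflexivity.
  - exfalso; auto.
Qed.

Lemma combine_vt y x : vt (combine y x) = vt x.
Proof. unfold combine. destruct (dec _); reflexivity. Qed.

Definition modl (y x : L) : list L :=
  if dec (isone (combine y x)) then [] else [combine y x].

Lemma modl_vt y x : Forall (fun z => vt z = vt x) (modl y x).
Proof. unfold modl. destruct (dec _); auto using combine_vt. Qed.

Fixpoint scan (u : V) (S : list L) : option (list L * L * list L) :=
  match S with
  | [] => None
  | y :: S' =>
      if dec (projT1 y = u) then Some ([], y, S')
      else if dec (E (projT1 y) u) then
        match scan u S' with
        | Some (B, z, A) => Some (y :: B, z, A)
        | None => None
        end
      else None
  end.

Definition adj u := fun b : L => E (projT1 b) u.

Lemma scan_sound u S B y A : scan u S = Some (B, y, A) ->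
  S = B ++ y :: A /\ projT1 y = u /\ Forall (adj u) B.
Proof.
  revert B; induction S as [|z S IH]; intros B H; simpl in H; [discriminate|].
  destruct (dec (projT1 z = u)).
  - inversion H; subst; simpl; auto.
  - destruct (dec (E (projT1 z) u)); [|discriminate].
    destruct (scan u S) as [[[B' z'] A']|] eqn:Hs; [|discriminate].
    inversion H; subst. destruct (IH _ eq_refl) as [-> [? ?]]. simpl; auto.
Qed.

Lemma scan_adj_app u B T : Forall (adj u) B ->
  scan u (B ++ T) = match scan u T with
                    | Some (B', y, A) => Some (B ++ B', y, A)
                    | None => None end.
Proof.
  induction 1 as [|b B Hb HB IH]; simpl.
  - destruct (scan u T) as [[[? ?] ?]|]; reflexivity.
  - destruct (dec (projT1 b = u)) as [e|_].
    + exfalso. unfold adj in Hb. rewrite e in Hb. eapply Hirr; eauto.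
    + destruct (dec (E (projT1 b) u)); [|contradiction].
      rewrite IH. destruct (scan u T) as [[[? ?] ?]|]; reflexivity.
Qed.

Lemma scan_complete u B y A : Forall (adj u) B -> projT1 y = u ->
  scan u (B ++ y :: A) = Some (B, y, A).
Proof.
  intros HB Hy. rewrite scan_adj_app by auto. simpl.
  destruct (dec (projT1 y = u)); [|contradiction]. rewrite app_nil_r; reflexivity.
Qed.

Lemma scan_none_remove u B z A : scan u (B ++ z :: A) = None -> E (projT1 z) u ->
  scan u (B ++ A) = None.
Proof.
  induction B as [|b B IH]; simpl; intros H Hz.
  - destruct (dec (projT1 z = u)); [discriminate|].
    destruct (dec (E (projT1 z) u)); [|contradiction].
    destruct (scan u A) as [[[? ?] ?]|]; [discriminate|reflexivity].
  - destruct (dec (projT1 b = u)); [discriminate|].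
    destruct (dec (E (projT1 b) u)); [|reflexivity].
    destruct (scan u (B ++ z :: A)) as [[[? ?] ?]|] eqn:Hs; [discriminate|].
    rewrite IH; auto.
Qed.

Lemma scan_none_insert u B z A : scan u (B ++ A) = None -> E (projT1 z) u ->
  scan u (B ++ z :: A) = None.
Proof.
  induction B as [|b B IH]; simpl; intros H Hz.
  - destruct (dec (projT1 z = u)) as [e|]. { rewrite e in Hz; exfalso; eapply Hirr; eauto. }
    destruct (dec (E (projT1 z) u)); [|contradiction]. rewrite H; reflexivity.
  - destruct (dec (projT1 b = u)); [discriminate|].
    destruct (dec (E (projT1 b) u)); [|reflexivity].
    destruct (scan u (B ++ A)) as [[[? ?] ?]|] eqn:Hs; [discriminate|].
    rewrite IH; auto.
Qed.

Lemma scan_none_replace u B y y' A : scan u (B ++ y :: A) = None -> projT1 y' = projT1 y ->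
  scan u (B ++ y' :: A) = None.
Proof.
  induction B as [|b B IH]; simpl; intros H Hv.
  - rewrite Hv. destruct (dec (projT1 y = u)); [discriminate|].
    destruct (dec (E (projT1 y) u)); [|reflexivity].
    destruct (scan u A) as [[[? ?] ?]|]; [discriminate|reflexivity].
  - destruct (dec (projT1 b = u)); [discriminate|].
    destruct (dec (E (projT1 b) u)); [|reflexivity].
    destruct (scan u (B ++ y :: A)) as [[[? ?] ?]|] eqn:Hs; [discriminate|].
    rewrite IH; auto.
Qed.


Definition act (S : list L) (x : L) : list L :=
  match scan (projT1 x) S with
  | Some (B, y, A) => B ++ modl y x ++ A
  | None => if dec (isone x) then S else x :: S
  end.

Fixpoint Red (S : list L) : Prop :=
  match S with
  | [] => True
  | y :: A => ~ isone y /\ scan (projT1 y) A = None /\ Red A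
  end.

Lemma Red_app B A : Red (B ++ A) -> Red A.
Proof. induction B; simpl; tauto. Qed.

Lemma Red_del u B y A : Red (B ++ y :: A) -> Forall (adj u) B -> projT1 y = u ->
  Red (B ++ A).
Proof.
  induction B as [|b B IH]; simpl; intros H HB Hy.
  - tauto.
  - inversion HB; subst. destruct H as [Ra [Rb Rc]]. split; [auto|split; [|auto]].
    eapply scan_none_remove; eauto.
Qed.

Lemma Red_repl B y y' A : Red (B ++ y :: A) -> projT1 y' = projT1 y -> ~ isone y' ->
  Red (B ++ y' :: A).
Proof.
  induction B as [|b B IH]; simpl; intros H Hv Hn.
  - rewrite Hv. tauto.
  - destruct H as [Ra [Rb Rc]]. split; [auto|split; [|auto]].
    eapply scan_none_replace; eauto.
Qed.

Lemma Red_act S x : Red S -> Red (act S x).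
Proof.
  intros HR. unfold act.
  destruct (scan (projT1 x) S) as [[[B y] A]|] eqn:Hs.
  - apply scan_sound in Hs as (-> & Hy & HB).
    unfold modl. destruct (dec _) as [Ho|Hno]; simpl.
    + eapply Red_del; eauto.
    + eapply Red_repl; eauto. rewrite Hy. apply combine_vt.
  - destruct (dec (isone x)); simpl; auto.
Qed.

Inductive sw : list L -> list L -> Prop :=
| sw_swap P a b Q : E (projT1 a) (projT1 b) -> sw (P ++ a :: b :: Q) (P ++ b :: a :: Q).

Inductive eqv : list L -> list L -> Prop :=
| ev_sw S S' : sw S S' -> eqv S S'
| ev_refl S : eqv S S
| ev_sym S S' : eqv S S' -> eqv S' S
| ev_trans S1 S2 S3 : eqv S1 S2 -> eqv S2 S3 -> eqv S1 S3.

Lemma eqv_swap P a b Q : E (projT1 a) (projT1 b) -> eqv (P ++ a :: b :: Q) (P ++ b :: a :: Q).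
Proof. intros; apply ev_sw; constructor; auto. Qed.

Lemma eqv_pre P S S' : eqv S S' -> eqv (P ++ S) (P ++ S').
Proof.
  induction 1 as [S S' Hs| | |]; try solve [econstructor; eauto].
  destruct Hs. rewrite !app_assoc. apply eqv_swap; auto.
Qed.

Lemma eqv_move x B A : Forall (adj (projT1 x)) B -> eqv (x :: B ++ A) (B ++ x :: A).
Proof.
  induction 1 as [|b B Hb HB IH]; simpl.
  - apply ev_refl.
  - eapply ev_trans. apply (eqv_swap [] x b (B ++ A)). apply Hsym; exact Hb.
    apply (eqv_pre [b]). exact IH.
Qed.

Lemma scan_sw u P a b Q : E (projT1 a) (projT1 b) ->
  (scan u (P++a::b::Q) = None /\ scan u (P++b::a::Q) = None) \/
  (exists B y P2, P = B ++ y :: P2 /\ scan u (P++a::b::Q) = Some (B,y,P2++a::b::Q)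
      /\ scan u (P++b::a::Q) = Some (B,y,P2++b::a::Q)) \/
  (projT1 a = u /\ scan u (P++a::b::Q) = Some (P,a,b::Q) /\ scan u (P++b::a::Q) = Some (P++[b],a,Q)) \/
  (projT1 b = u /\ scan u (P++a::b::Q) = Some (P++[a],b,Q) /\ scan u (P++b::a::Q) = Some (P,b,a::Q)) \/
  (exists B' y A, scan u (P++a::b::Q) = Some (P++a::b::B',y,A)
      /\ scan u (P++b::a::Q) = Some (P++b::a::B',y,A)).
Proof.
  intros Hab. induction P as [|p P IH]; simpl.
  - destruct (dec (projT1 a = u)) as [ea|na].
    + right; right; left. split; auto. split; auto.
      destruct (dec (projT1 b = u)) as [eb|nb].
      { exfalso. rewrite ea, eb in Hab. eapply Hirr; eauto. }
      destruct (dec (E (projT1 b) u)) as [|nE].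
      * destruct (dec (projT1 a = u)); [reflexivity|contradiction].
      * exfalso. apply nE. rewrite <- ea. auto.
    + destruct (dec (projT1 b = u)) as [eb|nb].
      * right; right; right; left. split; auto. split.
        -- destruct (dec (E (projT1 a) u)) as [|nE].
           ++ destruct (dec (projT1 b = u)); [reflexivity|contradiction].
           ++ exfalso. apply nE. rewrite <- eb. auto.
        -- destruct (dec (projT1 b = u)); [reflexivity|contradiction].
      * destruct (dec (E (projT1 a) u)) as [Ea|nEa];
        destruct (dec (E (projT1 b) u)) as [Eb|nEb].
        -- destruct (dec (projT1 b = u)); [contradiction|].
           destruct (dec (E (projT1 b) u)); [|contradiction].
           destruct (dec (projT1 a = u)); [contradiction|].
           destruct (dec (E (projT1 a) u)); [|contradiction].
           destruct (scan u Q) as [[[B' y] A]|].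
           ++ right; right; right; right. exists B', y, A. auto.
           ++ left; auto.
        -- left. destruct (dec (projT1 b = u)); [contradiction|].
           destruct (dec (E (projT1 b) u)); [contradiction|]. auto.
        -- left. destruct (dec (projT1 a = u)); [contradiction|].
           destruct (dec (E (projT1 a) u)); [contradiction|].
           destruct (scan u Q) as [[[? ?] ?]|]; auto.
        -- left. auto.
  - destruct (dec (projT1 p = u)).
    + right; left. exists [], p, P. auto.
    + destruct (dec (E (projT1 p) u)); [|left; auto].
      destruct IH as [[-> ->]|[[B [y [P2 [-> [-> ->]]]]]|[[? [-> ->]]|[[? [-> ->]]|[B' [y [A [-> ->]]]]]]]].
      * left; auto.
      * right; left. exists (p :: B), y, P2. auto.
      * right; right; left. auto.
      * right; right; right; left. auto.
      * right; right; right; right. exists B', y, A. auto.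
Qed.

Lemma act_sw S S' x : sw S S' -> eqv (act S x) (act S' x).
Proof.
  destruct 1 as [P a b Q Hab]. unfold act.
  destruct (scan_sw (projT1 x) P a b Q Hab) as
    [[-> ->]|[[B [y [P2 [-> [-> ->]]]]]|[[ea [-> ->]]|[[eb [-> ->]]|[B' [y [A [-> ->]]]]]]]].
  - destruct (dec (isone x)).
    + apply eqv_swap; auto.
    + apply (eqv_swap (x :: P)); auto.
  - apply eqv_pre. apply eqv_pre. apply eqv_swap; auto.
  - rewrite <- app_assoc. simpl. unfold modl. destruct (dec _).
    + apply ev_refl.
    + simpl. apply eqv_swap. rewrite combine_vt. unfold vt. rewrite <- ea. auto.
  - rewrite <- app_assoc. simpl. unfold modl. destruct (dec _).
    + apply ev_refl.
    + simpl. apply eqv_swap. rewrite combine_vt. unfold vt. rewrite <- eb. auto.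
  - rewrite <- !app_assoc. simpl. apply eqv_swap; auto.
Qed.

Lemma act_eqv S S' x : eqv S S' -> eqv (act S x) (act S' x).
Proof.
  induction 1; try solve [econstructor; eauto]. apply act_sw; auto.
Qed.

Lemma fold_eqv s S S' : eqv S S' -> eqv (fold_left act s S) (fold_left act s S').
Proof.
  revert S S'; induction s; simpl; intros; auto using act_eqv.
Qed.

Lemma Red_fold s S : Red S -> Red (fold_left act s S).
Proof. revert S; induction s; simpl; auto using Red_act. Qed.

Lemma Red_mid B y A : Red (B ++ y :: A) -> ~ isone y /\ scan (projT1 y) A = None.
Proof. intros H. apply Red_app in H. simpl in H. tauto. Qed.

Lemma act_one u S : Red S -> act S (lt C u mone) = S.
Proof.
  intros HR. unfold act, lt. simpl.
  destruct (scan u S) as [[[B y] A]|] eqn:Hs.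
  - apply scan_sound in Hs as (-> & Hy & HB).
    destruct (Red_mid _ _ _ HR) as [Hn _].
    destruct y as [w ya]; simpl in Hy; subst w.
    unfold modl. rewrite combine_eq, mone_r. destruct (dec _); [contradiction|reflexivity].
  - destruct (dec _) as [|n]; [reflexivity|]. exfalso; apply n; reflexivity.
Qed.

Lemma act_mul u (a b : C u) S : Red S ->
  eqv (act (act S (lt C u a)) (lt C u b)) (act S (lt C u (mmul a b))).
Proof.
  intros HR. unfold act at 2 3, lt. simpl.
  destruct (scan u S) as [[[B y] A]|] eqn:Hs.
  - apply scan_sound in Hs as (-> & Hy & HB).
    destruct (Red_mid _ _ _ HR) as [Hn HA].
    destruct y as [w ya]; simpl in Hy, HA; subst w.
    unfold modl. rewrite !combine_eq.
    destruct (dec (isone (existT _ u (mmul ya a)))) as [Ho|Hno]; simpl.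
    + unfold isone in Ho; simpl in Ho. rewrite massoc, Ho, mone_l.
      unfold act; simpl. rewrite scan_adj_app by auto. rewrite HA.
      destruct (dec (isone (existT _ u b))) as [Hb|Hb]; simpl.
      * apply ev_refl.
      * apply eqv_move. auto.
    + unfold act; simpl. rewrite scan_complete by auto. unfold modl.
      rewrite combine_eq, massoc. apply ev_refl.
  - destruct (dec (isone (existT _ u a))) as [Ho|Hno].
    + unfold isone in Ho; simpl in Ho. subst a. rewrite mone_l.
      destruct (dec (isone (existT _ u mone))) as [_|n]; [|exfalso; apply n; reflexivity].
      unfold act; simpl. rewrite Hs. apply ev_refl.
    + unfold act; simpl. destruct (dec (u = u)) as [_|n]; [|exfalso; auto].
      simpl. unfold modl. rewrite combine_eq.
      destruct (dec _); simpl; apply ev_refl.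
Qed.

Lemma split3 (B1 B2 A1 A2 : list L) y z : B1 ++ y :: A1 = B2 ++ z :: A2 ->
  (exists M, B1 = B2 ++ z :: M /\ A2 = M ++ y :: A1) \/
  (exists M, B2 = B1 ++ y :: M /\ A1 = M ++ z :: A2) \/
  (B1 = B2 /\ y = z /\ A1 = A2).
Proof.
  revert B2; induction B1 as [|b B1 IH]; intros [|c B2] H; simpl in H; inversion H; subst.
  - auto.
  - right; left. exists B2. auto.
  - left. exists B1. auto.
  - destruct (IH _ H2) as [[M [-> ->]]|[[M [-> ->]]|[-> [-> ->]]]].
    + left; exists M; auto.
    + right; left; exists M; auto.
    + auto.
Qed.

Lemma modl_adj u y x : E (projT1 x) u -> Forall (adj u) (modl y x).
Proof.
  intros H. pose proof (modl_vt y x) as Hm. induction Hm; constructor; auto.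
  unfold adj. unfold vt in H0. rewrite H0. auto.
Qed.

Lemma scan_none_modl w B y x A : scan w (B ++ y :: A) = None -> E (projT1 y) w ->
  projT1 x = projT1 y -> scan w (B ++ modl y x ++ A) = None.
Proof.
  intros H Hy Hx. pose proof (@scan_none_remove w B y A H Hy) as H'.
  unfold modl. destruct (dec _); simpl; auto.
  apply scan_none_insert; auto. rewrite combine_vt. unfold vt. rewrite Hx. auto.
Qed.

Lemma comm_case1 S x1 x2 B2 z M y A1 :
  E (projT1 x1) (projT1 x2) ->
  scan (projT1 x1) S = Some (B2 ++ z :: M, y, A1) ->
  scan (projT1 x2) S = Some (B2, z, M ++ y :: A1) ->
  act (act S x1) x2 = act (act S x2) x1.
Proof.
  intros H12 H1 H2.
  unfold act at 2 4. rewrite H1, H2.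
  apply scan_sound in H1 as (HS & Hy & HB1). apply scan_sound in H2 as (_ & Hz & HB2).
  apply Forall_app in HB1 as [HB2' HzM]. inversion HzM as [|? ? _ HM]; subst.
  unfold act. rewrite <- app_assoc. simpl.
  rewrite scan_complete by auto.
  replace (B2 ++ modl z x2 ++ M ++ y :: A1) with ((B2 ++ modl z x2 ++ M) ++ y :: A1)
    by (rewrite <- !app_assoc; reflexivity).
  rewrite scan_complete; auto.
  - rewrite <- !app_assoc. reflexivity.
  - apply Forall_app; split; auto. apply Forall_app; split; auto.
    apply modl_adj. auto.
Qed.

Lemma comm_case2 S x1 x2 B1 y A1 :
  E (projT1 x1) (projT1 x2) ->
  scan (projT1 x1) S = Some (B1, y, A1) ->
  scan (projT1 x2) S = None ->
  act (act S x1) x2 = act (act S x2) x1.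
Proof.
  intros H12 H1 H2.
  unfold act at 2 4. rewrite H1, H2.
  pose proof H1 as H1'.
  apply scan_sound in H1 as (HS & Hy & HB1).
  unfold act. rewrite HS in H2. rewrite scan_none_modl; auto; [|rewrite Hy; auto].
  destruct (dec (isone x2)).
  - rewrite H1'. reflexivity.
  - change (x2 :: S) with ([x2] ++ S). rewrite scan_adj_app.
    + rewrite H1'. reflexivity.
    + constructor; auto. unfold adj. auto.
Qed.

Lemma scan_cons_adj u x S : E (projT1 x) u ->
  scan u (x :: S) = match scan u S with Some (B,y,A) => Some (x::B,y,A) | None => None end.
Proof.
  intros H. simpl. destruct (dec (projT1 x = u)) as [e|].
  - rewrite e in H. exfalso; eapply Hirr; eauto.
  - destruct (dec (E (projT1 x) u)); [reflexivity|contradiction].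
Qed.

Lemma act_comm S (x1 x2 : L) : E (projT1 x1) (projT1 x2) ->
  eqv (act (act S x1) x2) (act (act S x2) x1).
Proof.
  intros H12.
  destruct (scan (projT1 x1) S) as [[[B1 y] A1]|] eqn:H1;
  destruct (scan (projT1 x2) S) as [[[B2 z] A2]|] eqn:H2.
  - pose proof H1 as H1'. pose proof H2 as H2'.
    apply scan_sound in H1' as (HS1 & Hy & _). apply scan_sound in H2' as (HS2 & Hz & _).
    rewrite HS1 in HS2.
    destruct (split3 _ _ _ _ _ _ HS2) as [[M [-> ->]]|[[M [-> ->]]|[-> [-> ->]]]].
    + erewrite comm_case1; eauto. apply ev_refl.
    + erewrite <- comm_case1; eauto. apply ev_refl.
    + exfalso. rewrite Hz in Hy. rewrite Hy in H12. eapply Hirr; eauto.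
  - erewrite comm_case2; eauto. apply ev_refl.
  - erewrite <- comm_case2; eauto. apply ev_refl.
  - assert (A1 : scan (projT1 x1) (x2 :: S) = None)
      by (rewrite scan_cons_adj, H1; auto).
    assert (A2 : scan (projT1 x2) (x1 :: S) = None)
      by (rewrite scan_cons_adj, H2; auto).
    unfold act. rewrite H1, H2.
    destruct (dec (isone x1)); destruct (dec (isone x2)); cbv beta iota.
    + rewrite H1, H2. destruct (dec (isone x1)); destruct (dec (isone x2)); try contradiction. apply ev_refl.
    + rewrite A1, H2. destruct (dec (isone x1)); destruct (dec (isone x2)); try contradiction. apply ev_refl.
    + rewrite A2, H1. destruct (dec (isone x1)); destruct (dec (isone x2)); try contradiction. apply ev_refl.
    + rewrite A1, A2. destruct (dec (isone x1)); destruct (dec (isone x2)); try contradiction.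
      apply (eqv_swap []). auto.
Qed.

Notation gc := (@gp_cong V E C).

Lemma gc_ctx p w w' s : gc w w' -> gc (p ++ w ++ s) (p ++ w' ++ s).
Proof.
  induction 1.
  - rewrite <- !app_assoc. rewrite (app_assoc p p0 (l ++ s0 ++ s)), (app_assoc p p0 (r ++ s0 ++ s)).
    apply gc_step; auto.
  - apply gc_refl.
  - apply gc_sym; auto.
  - eapply gc_trans; eauto.
Qed.

Lemma gc_of_step l r : gp_step E l r -> gc l r.
Proof. intros H. pose proof (gc_step [] [] H) as H'. simpl in H'. rewrite !app_nil_r in H'. exact H'. Qed.

Lemma step_comm (a b : L) : E (projT1 a) (projT1 b) -> gp_step E [a; b] [b; a].
Proof. destruct a as [u m], b as [w n]; simpl; intros. apply (gs_comm E C u w m n). auto. Qed.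

Lemma step_mul (y x : L) : projT1 y = projT1 x -> gp_step E [y; x] [combine y x].
Proof.
  destruct y as [u a], x as [w b]; simpl; intros H; subst. rewrite combine_eq.
  apply (gs_mul E C w a b).
Qed.

Lemma step_one (x : L) : isone x -> gp_step E [x] [].
Proof. destruct x as [u a]; unfold isone; simpl; intros H; subst. apply (gs_one E C u). Qed.

Lemma move_left (x : L) B : Forall (adj (projT1 x)) B -> gc (rev B ++ [x]) (x :: rev B).
Proof.
  induction 1 as [|b B Hb HB IH]; simpl.
  - apply gc_refl.
  - eapply gc_trans.
    + rewrite <- app_assoc. simpl. apply (@gc_ctx (rev B) [b; x] [x; b] []).
      apply gc_of_step, step_comm. exact Hb.
    + simpl.
      replace (rev B ++ [x; b]) with ((rev B ++ [x]) ++ [b]) by (rewrite <- app_assoc; reflexivity).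
      pose proof (@gc_ctx [] _ _ [b] IH) as H. simpl in H. exact H.
Qed.

Lemma yx (y x : L) : projT1 y = projT1 x -> gc [y; x] (modl y x).
Proof.
  intros H. eapply gc_trans. apply gc_of_step, step_mul; auto.
  unfold modl. destruct (dec _). apply gc_of_step, step_one; auto. apply gc_refl.
Qed.

Lemma rev_modl y x : rev (modl y x) = modl y x.
Proof. unfold modl. destruct (dec _); reflexivity. Qed.

Lemma realize_act S (x : L) : gc (rev S ++ [x]) (rev (act S x)).
Proof.
  unfold act. destruct (scan (projT1 x) S) as [[[B y] A]|] eqn:Hs.
  - apply scan_sound in Hs as (-> & Hy & HB).
    rewrite !rev_app_distr, rev_modl. simpl. rewrite <- !app_assoc. simpl.
    eapply gc_trans.
    { pose proof (@gc_ctx (rev A ++ [y]) _ _ [] (@move_left x B HB)) as H.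
      rewrite app_nil_r, <- !app_assoc in H. simpl in H. exact H. }
    pose proof (@gc_ctx (rev A) [y; x] (modl y x) (rev B) (@yx y x Hy)) as H. simpl in H. rewrite app_nil_r. exact H.
  - destruct (dec (isone x)).
    + pose proof (@gc_ctx (rev S) [x] [] [] (gc_of_step (step_one i))) as H.
      rewrite !app_nil_r in H. exact H.
    + apply gc_refl.
Qed.

Lemma step_eqv S l r : Red S -> gp_step E l r -> eqv (fold_left act l S) (fold_left act r S).
Proof.
  intros HR H. destruct H; simpl.
  - rewrite act_one; auto. apply ev_refl.
  - apply act_mul; auto.
  - apply (act_comm S (lt C u m) (lt C v n)). simpl. auto.
Qed.

Definition st (w : word C) : list L := fold_left act w [].

Lemma st_red w : Red (st w).
Proof. apply Red_fold. simpl; auto. Qed.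

Lemma st_cong w w' : gc w w' -> eqv (st w) (st w').
Proof.
  induction 1.
  - unfold st. rewrite !fold_left_app. apply fold_eqv. apply step_eqv; auto.
    apply Red_fold. simpl; auto.
  - apply ev_refl.
  - apply ev_sym; auto.
  - eapply ev_trans; eauto.
Qed.

Lemma realize_fold w S : gc (rev S ++ w) (rev (fold_left act w S)).
Proof.
  revert S; induction w as [|x w IH]; intros S; simpl.
  - rewrite app_nil_r. apply gc_refl.
  - eapply gc_trans; [|apply IH].
    replace (rev S ++ x :: w) with ((rev S ++ [x]) ++ w) by (rewrite <- app_assoc; reflexivity).
    pose proof (@gc_ctx [] _ _ w (realize_act S x)) as H. simpl in H. exact H.
Qed.

Lemma st_real w : gc w (rev (st w)).
Proof. apply (realize_fold w []). Qed.

Variable v : V.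

Definition getv (y : L) : C v :=
  match dec (projT1 y = v) with
  | left e => eq_rect _ (fun w => mcar (C w)) (projT2 y) _ e
  | right _ => mone
  end.

Lemma getv_eq (a : C v) : getv (existT _ v a) = a.
Proof.
  unfold getv; simpl. destruct (dec (v = v)) as [e|n].
  - rewrite (UIP_refl _ _ e). reflexivity.
  - exfalso; auto.
Qed.

Definition tail (S : list L) : C v :=
  match scan v S with Some (_, y, _) => getv y | None => mone end.
Definition head (S : list L) : list L :=
  match scan v S with Some (B, _, A) => B ++ A | None => S end.

Lemma ht_real S : gc (rev S) (rev (head S) ++ [lt C v (tail S)]).
Proof.
  unfold head, tail. destruct (scan v S) as [[[B y] A]|] eqn:Hs.
  - apply scan_sound in Hs as (-> & Hy & HB).
    destruct y as [w a]; simpl in Hy; subst w. rewrite getv_eq.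
    rewrite !rev_app_distr. simpl. rewrite <- !app_assoc. simpl.
    apply gc_sym.
    pose proof (@gc_ctx (rev A) _ _ [] (@move_left (existT _ v a) B HB)) as H.
    rewrite !app_nil_r in H. exact H.
  - apply gc_sym.
    pose proof (@gc_ctx (rev S) [lt C v mone] [] [] (gc_of_step (gs_one E C v))) as H.
    rewrite !app_nil_r in H. exact H.
Qed.

Lemma ht_act S d : Red S ->
  tail (act S (lt C v d)) = mmul (tail S) d /\ head (act S (lt C v d)) = head S.
Proof.
  intros HR. unfold act, lt. simpl.
  destruct (scan v S) as [[[B y] A]|] eqn:Hs.
  - pose proof Hs as Hs'.
    apply scan_sound in Hs as (-> & Hy & HB).
    destruct (Red_mid _ _ _ HR) as [Hn HA].
    destruct y as [w ya]; simpl in Hy, HA; subst w.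
    unfold tail, head. rewrite Hs'. rewrite getv_eq.
    unfold modl. rewrite combine_eq.
    destruct (dec (isone (existT _ v (mmul ya d)))) as [Ho|Hno]; simpl.
    + rewrite scan_adj_app by auto. rewrite HA. unfold isone in Ho; simpl in Ho. auto.
    + rewrite scan_complete by auto. rewrite getv_eq. auto.
  - unfold tail, head. rewrite Hs.
    destruct (dec (isone (existT _ v d))) as [Ho|Hno].
    + rewrite Hs. unfold isone in Ho; simpl in Ho. subst d. rewrite mone_l. auto.
    + simpl. destruct (dec (v = v)) as [_|n]; [|exfalso; auto]. rewrite getv_eq, mone_l. auto.
Qed.

Lemma rev_sw P (a b : L) Q : E (projT1 a) (projT1 b) ->
  gc (rev (P ++ a :: b :: Q)) (rev (P ++ b :: a :: Q)).
Proof.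
  intros H. rewrite !rev_app_distr. simpl. rewrite <- !app_assoc. simpl.
  apply (@gc_ctx (rev Q) [b; a] [a; b] (rev P)). apply gc_of_step, step_comm. auto.
Qed.

Lemma ht_sw S S' : sw S S' -> tail S = tail S' /\ gc (rev (head S)) (rev (head S')).
Proof.
  destruct 1 as [P a b Q Hab]. unfold tail, head.
  destruct (scan_sw v P a b Q Hab) as
    [[-> ->]|[[B [y [P2 [-> [-> ->]]]]]|[[ea [-> ->]]|[[eb [-> ->]]|[B' [y [A [-> ->]]]]]]]].
  - split; auto. apply rev_sw; auto.
  - split; auto. rewrite !app_assoc. apply rev_sw; auto.
  - split; auto. rewrite <- app_assoc. apply gc_refl.
  - split; auto. rewrite <- app_assoc. apply gc_refl.
  - split; auto. rewrite <- !app_assoc. simpl. apply rev_sw; auto.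
Qed.

Lemma ht_eqv S S' : eqv S S' -> tail S = tail S' /\ gc (rev (head S)) (rev (head S')).
Proof.
  induction 1 as [S S' H| |S S' H [IH1 IH2]|S1 S2 S3 H1 [IH1 IH2] H2 [IH3 IH4]].
  - apply ht_sw; auto.
  - split; auto. apply gc_refl.
  - split; auto. apply gc_sym; auto.
  - split. congruence. eapply gc_trans; eauto.
Qed.

Notation G := (GP E C).

Lemma sig_ext A (P : A -> Prop) (x y : sig P) : proj1_sig x = proj1_sig y -> x = y.
Proof. destruct x, y; simpl; intros ->. f_equal. apply proof_irrelevance. Qed.

Lemma class_eq w1 w2 : gc w1 w2 -> gp_class E w1 = gp_class E w2.
Proof.
  intros H. apply sig_ext. simpl.
  apply functional_extensionality_dep; intros w.
  apply propositional_extensionality. split; intros H'.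
  - eapply gc_trans; [apply gc_sym; exact H|exact H'].
  - eapply gc_trans; eauto.
Qed.

Lemma class_inv w1 w2 : gp_class E w1 = gp_class E w2 -> gc w1 w2.
Proof.
  intros H. apply (f_equal (@proj1_sig _ _)) in H. simpl in H.
  assert (gc w2 w2) by apply gc_refl. rewrite <- H in H0. exact H0.
Qed.

Lemma rep_spec (X : G) : proj1_sig X = gp_cong E (gp_rep X).
Proof.
  unfold gp_rep. exact (proj2_sig (IndefiniteDescription.constructive_indefinite_description (fun w => proj1_sig X = gp_cong E w) (proj2_sig X))).
Qed.

Lemma class_rep (X : G) : gp_class E (gp_rep X) = X.
Proof. apply sig_ext. simpl. symmetry. apply rep_spec. Qed.

Lemma rep_class (w : word C) : gc (gp_rep (gp_class E w)) w.
Proof.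
  pose proof (rep_spec (gp_class E w)) as H. simpl in H.
  assert (gc w w) by apply gc_refl. rewrite H in H0. exact H0.
Qed.

Lemma gc_app a a' b b' : gc a a' -> gc b b' -> gc (a ++ b) (a' ++ b').
Proof.
  intros H1 H2. eapply gc_trans.
  - pose proof (@gc_ctx [] _ _ b H1) as H. simpl in H. exact H.
  - pose proof (@gc_ctx a' _ _ [] H2) as H. rewrite !app_nil_r in H. exact H.
Qed.

Lemma mul_class (a b : word C) : gp_mul (gp_class E a) (gp_class E b) = gp_class E (a ++ b).
Proof. unfold gp_mul. apply class_eq. apply gc_app; apply rep_class. Qed.

Definition iota (d : C v) : G := gp_class E [lt C v d].
Definition TT (X : G) : C v := tail (st (gp_rep X)).
Definition HH (X : G) : G := gp_class E (rev (head (st (gp_rep X)))).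

Lemma TH_class (w : word C) : TT (gp_class E w) = tail (st w) /\ HH (gp_class E w) = gp_class E (rev (head (st w))).
Proof.
  unfold TT, HH. destruct (ht_eqv (st_cong (rep_class w))) as [H1 H2].
  split; auto. apply class_eq; auto.
Qed.

Lemma P1 X : X = gp_mul (HH X) (iota (TT X)).
Proof.
  unfold HH, TT, iota. rewrite mul_class. rewrite <- (class_rep X) at 1.
  apply class_eq. eapply gc_trans. apply st_real. apply ht_real.
Qed.

Lemma P23 X d : TT (gp_mul X (iota d)) = mmul (TT X) d /\ HH (gp_mul X (iota d)) = HH X.
Proof.
  rewrite <- (class_rep X). unfold iota. rewrite mul_class.
  destruct (TH_class (gp_rep X ++ [lt C v d])) as [-> ->].
  destruct (TH_class (gp_rep X)) as [-> ->].
  unfold st. rewrite fold_left_app. simpl.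
  destruct (ht_act (fold_left act (gp_rep X) []) d) as [-> ->].
  - apply (st_red (gp_rep X)).
  - auto.
Qed.

Lemma KEY Z Y d a : gp_mul Z (iota d) = gp_mul Y (iota a) ->
  exists W p q, Z = gp_mul W (iota p) /\ Y = gp_mul W (iota q) /\ mmul p d = mmul q a.
Proof.
  intros H. exists (HH Z), (TT Z), (TT Y).
  destruct (P23 Z d) as [T1 H1]. destruct (P23 Y a) as [T2 H2].
  rewrite H in T1, H1. split; [apply P1|split].
  - rewrite <- H1, H2. apply P1.
  - rewrite <- T1, <- T2. reflexivity.
Qed.

Lemma iota_mul Z c a : gp_mul (gp_mul Z (iota c)) (iota a) = gp_mul Z (iota (mmul c a)).
Proof.
  rewrite <- (class_rep Z). unfold iota. rewrite !mul_class. apply class_eq.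
  rewrite <- app_assoc. simpl.
  pose proof (@gc_ctx (gp_rep Z) _ _ [] (gc_of_step (gs_mul E C v c a))) as H.
  rewrite !app_nil_r in H. exact H.
Qed.

Lemma mul_iota1 Z : gp_mul Z (iota mone) = Z.
Proof.
  rewrite <- (class_rep Z) at 2. unfold iota. rewrite <- (class_rep Z) at 1. rewrite mul_class.
  apply class_eq.
  pose proof (@gc_ctx (gp_rep Z) _ _ [] (gc_of_step (gs_one E C v))) as H.
  rewrite !app_nil_r in H. exact H.
Qed.

Lemma one_mul c : gp_mul (gp_class E []) (iota c) = iota c.
Proof. unfold iota. rewrite mul_class. reflexivity. Qed.

Lemma TT_iota c : TT (iota c) = c.
Proof.
  rewrite <- one_mul. destruct (P23 (gp_class E []) c) as [-> _].
  destruct (TH_class []) as [-> _]. apply mone_l.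
Qed.

Definition LE (f : prel (C v)) := forall p c d, f c d -> f (mmul p c) (mmul p d).

Definition phi (f : prel (C v)) : prel G :=
  fun x y => exists Z c d, f c d /\ x = gp_mul Z (iota c) /\ y = gp_mul Z (iota d).

Lemma phi_ext f g : releq f g -> releq (phi f) (phi g).
Proof.
  intros H x y; split; intros (Z & c & d & Hf & -> & ->); exists Z, c, d; split; auto;
  apply H; auto.
Qed.

Lemma phi_comp f g : LE f -> LE g -> releq (phi (rcomp f g)) (rcomp (phi f) (phi g)).
Proof.
  intros Lf Lg x y; split.
  - intros (Z & c & e & (d & Hf & Hg) & -> & ->).
    exists (gp_mul Z (iota d)). split; [exists Z, c, d|exists Z, d, e]; auto.
  - intros (m & (Z & c & d & Hf & -> & Hm) & (W & c' & e' & Hg & Hm' & ->)).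
    rewrite Hm' in Hm.
    destruct (KEY (eq_sym Hm)) as (Y & p & q & -> & -> & Hpq).
    exists Y, (mmul p c), (mmul q e'). split; [|split].
    + exists (mmul p d). split; auto. rewrite Hpq. auto.
    + rewrite iota_mul. reflexivity.
    + rewrite iota_mul. reflexivity.
Qed.

Lemma phi_id : releq (phi (@eq (C v))) (@eq G).
Proof.
  intros x y; split.
  - intros (Z & c & d & <- & -> & ->). reflexivity.
  - intros <-. exists x, mone, mone. rewrite mul_iota1. auto.
Qed.

Lemma phi_inj f g : LE g -> releq (phi f) (phi g) -> forall c d, f c d -> g c d.
Proof.
  intros Lg H c d Hf.
  assert (phi f (iota c) (iota d)) as Hp.
  { exists (gp_class E []), c, d. rewrite !one_mul. auto. }
  apply H in Hp as (Z & c' & d' & Hg & Hc & Hd).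
  assert (TT (iota c) = mmul (TT Z) c') as Ec by (rewrite Hc; apply P23).
  assert (TT (iota d) = mmul (TT Z) d') as Ed by (rewrite Hd; apply P23).
  rewrite !TT_iota in Ec, Ed. rewrite Ec, Ed. apply Lg; auto.
Qed.

Lemma phi_rho f a : releq (phi (rcomp f (rho (@mmul (C v)) a))) (rcomp (phi f) (rho (@gp_mul V E C) (iota a))).
Proof.
  intros x y; split.
  - intros (Z & c & e & (d & Hf & He) & -> & ->).
    exists (gp_mul Z (iota d)). split; [exists Z, c, d; auto|].
    unfold rho. rewrite iota_mul, He. reflexivity.
  - intros (m & (Z & c & d & Hf & -> & ->) & Hy). unfold rho in Hy. rewrite iota_mul in Hy. subst y.
    exists Z, c, (mmul d a). split; auto. exists d. split; auto. reflexivity.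
Qed.

Lemma phi_rhoi f a : LE f ->
  releq (phi (rcomp f (rinv (rho (@mmul (C v)) a)))) (rcomp (phi f) (rinv (rho (@gp_mul V E C) (iota a)))).
Proof.
  intros Lf x y; split.
  - intros (Z & c & e & (d & Hf & He) & -> & ->).
    exists (gp_mul Z (iota d)). split; [exists Z, c, d; auto|].
    unfold rinv, rho. rewrite iota_mul. unfold rinv, rho in He. rewrite He. reflexivity.
  - intros (m & (Z & c & d & Hf & -> & ->) & Hy). unfold rinv, rho in Hy.
    destruct (KEY Hy) as (W & p & q & -> & -> & Hpq).
    exists W, (mmul p c), q. split; [|split].
    + exists (mmul p d). split; auto.
    + rewrite iota_mul. reflexivity.
    + reflexivity.
Qed.

End NF.
Lemma IH_LE (M : Monoid) f : IH0 (@mmul M) f -> forall p c d, f c d -> f (mmul p c) (mmul p d).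
Proof.
  intros [H|H].
  - induction H as [|a f Hf IH|a f Hf IH|f g Hf IH Hfg]; intros p c d Hcd.
    + subst; reflexivity.
    + destruct Hcd as (e & H1 & H2). exists (mmul p e). split; auto.
      unfold rho in *. rewrite H2. apply massoc.
    + destruct Hcd as (e & H1 & H2). exists (mmul p e). split; auto.
      unfold rinv, rho in *. rewrite H2. apply massoc.
    + apply Hfg. apply IH. apply Hfg. auto.
  - intros p c d Hcd. apply H in Hcd. contradiction.
Qed.

Lemma releq_sym X (f g : prel X) : releq f g -> releq g f.
Proof. intros H x y; split; apply H. Qed.

Theorem proposition2p8 (V : Type) (E : V -> V -> Prop) (C : V -> Monoid) :
  is_graph E ->
  (forall v, left_LCM (C v)) ->
  forall v : V,
  exists phi : prel (C v) -> prel (GP E C),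
    (forall f, IH0 (@mmul (C v)) f -> IH0 (@gp_mul V E C) (phi f)) /\
    (forall f g, IH0 (@mmul (C v)) f -> IH0 (@mmul (C v)) g ->
       releq f g -> releq (phi f) (phi g)) /\
    (forall f g, IH0 (@mmul (C v)) f -> IH0 (@mmul (C v)) g ->
       releq (phi (rcomp f g)) (rcomp (phi f) (phi g))) /\
    releq (phi (@eq (C v))) (@eq (GP E C)) /\
    (forall f g, IH0 (@mmul (C v)) f -> IH0 (@mmul (C v)) g ->
       releq (phi f) (phi g) -> releq f g).
Proof.
  intros [Hirr Hsym] _ v.
  exists (@phi V E C v). split; [|split; [|split; [|split]]].
  - intros f [Hf|Hf].
    + left. induction Hf as [|a f Hf IH|a f Hf IH|f g Hf IH Hfg].
      * eapply IH_ext. apply IH_id. apply releq_sym. apply phi_id; auto.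
      * eapply IH_ext. apply (IH_r (iota E C v a) IH). apply releq_sym. apply phi_rho; auto.
      * eapply IH_ext. apply (IH_ri (iota E C v a) IH). apply releq_sym. apply phi_rhoi; auto.
        intros p c d. apply IH_LE. left; auto.
      * eapply IH_ext. apply IH. apply phi_ext. auto.
    + right. intros x y; split.
      * intros (Z & c & d & Hcd & _). apply Hf in Hcd. contradiction.
      * intros [].
  - intros f g _ _ H. apply phi_ext. auto.
  - intros f g Hf Hg. apply phi_comp; auto.
    + intros p c d. apply IH_LE; auto.
    + intros p c d. apply IH_LE; auto.
  - apply phi_id; auto.
  - intros f g Hf Hg H x y; split.
    + apply (phi_inj Hirr Hsym); auto. intros p c d. apply IH_LE; auto.
    + apply (phi_inj Hirr Hsym); auto. intros p c d. apply IH_LE; auto. apply releq_sym; auto.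
Qed.
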